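(* Let $\mathbf P=UV^\top$ be an ergodic transition matrix on $\{1,\dots,p\}$ with stationary distribution $\pi$, where $U,V\in\mathbb R^{p\times r}$ are entrywise nonnegative with $U\mathbf 1_r=\mathbf 1_p$, $V^\top\mathbf 1_p=\mathbf 1_r$. Suppose there are constants $c_1,C_1,c_2>0$ with $c_1p^{-1}\le\pi_j\le C_1p^{-1}$ for all $j$, $\lambda_{\min}(U^\top[\mathrm{diag}(\pi)]^2U)\ge c_2p^{-1}r^{-1}$ and $\lambda_{\min}(V^\top[\mathrm{diag}(\pi)]^{-1}V)\ge c_2r$. Let $\sigma_1\ge\dots\ge\sigma_r$ be the $r$ largest singular values of $\mathbf Q=\mathrm{diag}(\pi)\mathbf P[\mathrm{diag}(\pi)]^{-1/2}$. Then $$c_2p^{-1/2}\le\sigma_r\le\sigma_1\le C_1c_1^{-1/2}p^{-1/2}.$$ *)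

(* Defs.v *)
(* Real numbers are an arbitrary real closed field R
   (the statement is algebraic, so this includes the usual reals). *)
From mathcomp Require Import all_boot all_order all_algebra.
Set Implicit Arguments. Unset Strict Implicit. Unset Printing Implicit Defensive.
Import Order.TTheory GRing.Theory Num.Theory.
Local Open Scope ring_scope.

Section Defs.
Variable R : rcfType.

Definition mxpow (p : nat) (P : 'M[R]_p) (k : nat) : 'M[R]_p :=
  iter k (mulmx P) 1%:M.

Definition transition_matrix (p : nat) (P : 'M[R]_p) : Prop :=
  (forall i j, 0 <= P i j) /\ (forall i, \sum_j P i j = 1).

Definition irreducible (p : nat) (P : 'M[R]_p) : Prop :=
  forall i j, exists k, 0 < mxpow P k i j.

(* aperiodic: every state has period 1, the period of i being the gcd of
   {k >= 1 | P^k(i,i) > 0} (written out: its only common divisor is 1) *)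
Definition aperiodic (p : nat) (P : 'M[R]_p) : Prop :=
  forall i d, (forall k, (0 < k)%N -> 0 < mxpow P k i i -> (d %| k)%N) -> d = 1%N.

Definition ergodic (p : nat) (P : 'M[R]_p) : Prop :=
  transition_matrix P /\ irreducible P /\ aperiodic P.

Definition stationary_distribution (p : nat) (P : 'M[R]_p) (pi : 'rV[R]_p) : Prop :=
  (forall j, 0 <= pi 0 j) /\ \sum_j pi 0 j = 1 /\ pi *m P = pi.

Definition lambda_min_ge (n : nat) (A : 'M[R]_n) (c : R) : Prop :=
  forall a, eigenvalue A a -> c <= a.

(* s is the list of ALL singular values of Q (with multiplicity), in
   nonincreasing order: s = map sqrt e where e lists the eigenvalues of
   Q^T Q (roots of its characteristic polynomial, with multiplicity),
   sorted nonincreasingly. *)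
Definition singular_values (p : nat) (Q : 'M[R]_p) (s : seq R) : Prop :=
  exists e : seq R,
    sorted (fun x y => y <= x) e /\
    char_poly (Q^T *m Q) = \prod_(x <- e) ('X - x%:P) /\
    s = map Num.sqrt e.

End Defs.

(* Main.v *)
Require Import Defs.
From mathcomp Require Import all_boot all_order all_algebra.
From mathcomp Require Import ring lra.
From mathcomp Require Import complex.
Import Order.TTheory GRing.Theory Num.Theory.
Local Open Scope ring_scope.
Local Open Scope sesquilinear_scope.
Lemma char_poly_conj (F : fieldType) n (P D : 'M[F]_n) : P \in unitmx ->
  char_poly (invmx P *m D *m P) = char_poly D.
Proof.
move=> Pu; rewrite /char_poly /char_poly_mx.
set f := (@polyC F).
have E : 'X%:M = map_mx f (invmx P) *m 'X%:M *m map_mx f P :> 'M_n.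
  rewrite -mulmxA -scalar_mxC mulmxA -map_mxM mulVmx // map_mx1 mul1mx //.
have -> : 'X%:M - map_mx f (invmx P *m D *m P) =
   map_mx f (invmx P) *m ('X%:M - map_mx f D) *m map_mx f P.
  by rewrite mulmxBr mulmxBl -E !map_mxM.
rewrite !det_mulmx !det_map_mx.
rewrite mulrC mulrA -rmorphM -det_mulmx mulmxV // det1 rmorph1 mul1r //.
Qed.
Lemma real_conj_mx (R : rcfType) m n (A : 'M[R]_(m, n)) :
  map_mx (real_complex R) A ^ Num.conj = map_mx (real_complex R) A.
Proof. by apply/matrixP => i j; rewrite !mxE; exact: conjc_real. Qed.

Lemma sym_spectral (R : rcfType) n (S : 'M[R]_n) : S^T = S ->
  exists P : 'M[R[i]]_n, exists d : 'rV[R]_n,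
  [/\ P *m P^t* = 1%:M, P^t* *m P = 1%:M,
   map_mx (real_complex R) S = P^t* *m diag_mx (map_mx (real_complex R) d) *m P &
   char_poly S = \prod_i ('X - (d 0 i)%:P)].
Proof.
move=> sS; set SC := map_mx (real_complex R) S.
have SCt : SC^t* = SC.
  by rewrite /SC map_trmx sS real_conj_mx.
have SCn : SC \is normalmx by apply/normalmxP; rewrite SCt.
have SCh : SC \is hermsymmx by apply/is_hermitianmxP; rewrite SCt expr0 scale1r.
have := hermitian_spectral_diag_real SCh.
move/orthomx_spectralP: SCn.
set P := spectralmx SC; set sp := spectral_diag SC => SCE spR.
have Pu : P \is unitarymx := spectral_unitarymx SC.
have Pinv : invmx P = P^t* := invmx_unitary Pu.
have Punit : P \in unitmx := unitarymx_unit Pu.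
exists P, (\row_i complex.Re (sp 0 i)).
have spE : map_mx (real_complex R) (\row_i complex.Re (sp 0 i)) = sp.
  apply/matrixP => i j; rewrite !mxE ord1; apply: RRe_real.
  by move/mxOverP: spR; apply.
split.
- exact/unitarymxP.
- by rewrite -Pinv mulVmx.
- by rewrite spE -Pinv.
apply: (@map_poly_inj _ _ (real_complex R)).
rewrite map_char_poly -/SC SCE char_poly_conj // char_poly_trig ?diag_mx_is_trig //.
rewrite rmorph_prod; apply: eq_bigr => i _.
rewrite /= map_polyXsubC !mxE eqxx mulr1n.
by rewrite -[in LHS]spE !mxE.
Qed.
Lemma trmxC_mul (C : numClosedFieldType) m n k (A : 'M[C]_(m, n)) (B : 'M[C]_(n, k)) :
  (A *m B)^t* = B^t* *m A^t*.
Proof. by rewrite trmx_mul map_mxM. Qed.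

Lemma dotC_expand (C : numClosedFieldType) n (y : 'rV[C]_n) :
  (y *m y^t*) 0 0 = \sum_i y 0 i * Num.conj (y 0 i).
Proof. by rewrite !mxE; apply: eq_bigr => i _; rewrite !mxE. Qed.

Lemma qf_diag (C : numClosedFieldType) n (P : 'M[C]_n) (e y : 'rV[C]_n) :
  (y *m (P^t* *m diag_mx e *m P) *m y^t*) 0 0 =
  \sum_i e 0 i * ((y *m P^t*) 0 i * Num.conj ((y *m P^t*) 0 i)).
Proof.
set z := y *m P^t*.
have -> : y *m (P^t* *m diag_mx e *m P) *m y^t* = z *m diag_mx e *m z^t*.
  by rewrite /z trmxC_mul trmxCK !mulmxA.
rewrite mul_mx_diag !mxE; apply: eq_bigr => i _; rewrite !mxE.
by rewrite mulrA [e 0 i * _]mulrC.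
Qed.

Lemma dot_unitary (C : numClosedFieldType) n (P : 'M[C]_n) (y : 'rV[C]_n) :
  P^t* *m P = 1%:M -> y *m y^t* = (y *m P^t*) *m (y *m P^t*)^t*.
Proof. by move=> PP; rewrite trmxC_mul trmxCK mulmxA -(mulmxA y) PP mulmx1. Qed.

Lemma root_prod_ord (F : fieldType) n (d : 'rV[F]_n) j :
  root (\prod_i ('X - (d 0 i)%:P)) (d 0 j).
Proof. by rewrite /root horner_prod (bigD1 j) //= hornerXsubC subrr mul0r. Qed.

Lemma L1 (R : rcfType) n (S : 'M[R]_n) c : S^T = S -> lambda_min_ge S c ->
  forall y : 'rV[R[i]]_n,
  real_complex R c * (y *m y^t*) 0 0 <= (y *m map_mx (real_complex R) S *m y^t*) 0 0.
Proof.
move=> sS hS y; have [P [d [PP1 PP2 SE chE]]] := @sym_spectral _ _ _ sS.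
rewrite SE qf_diag (@dot_unitary _ _ _ y PP2) dotC_expand mulr_sumr.
apply: ler_sum => i _; rewrite mxE; apply: ler_wpM2r; first exact: mul_conjC_ge0.
rewrite mxE lecR; apply: hS; rewrite eigenvalue_root_char chE; exact: root_prod_ord.
Qed.

Lemma aux2 (C : numDomainType) (c d u w : C) : 0 <= u * w -> c <= d -> 0 <= d ->
  c * (d * (u * w)) <= d * d * (u * w).
Proof.
move=> uw cd d0; rewrite mulrA.
by apply: ler_wpM2r => //; apply: ler_wpM2r.
Qed.

Lemma L2 (R : rcfType) n (S : 'M[R]_n) c : S^T = S -> lambda_min_ge S c -> 0 <= c ->
  forall y : 'rV[R[i]]_n,
  real_complex R c * (y *m map_mx (real_complex R) S *m y^t*) 0 0 <=
  (y *m (map_mx (real_complex R) S *m map_mx (real_complex R) S) *m y^t*) 0 0.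
Proof.
move=> sS hS c0 y; have [P [d [PP1 PP2 SE chE]]] := @sym_spectral _ _ _ sS.
have SSE : map_mx (real_complex R) S *m map_mx (real_complex R) S =
   P^t* *m diag_mx (\row_j (map_mx (real_complex R) d 0 j * map_mx (real_complex R) d 0 j)) *m P.
  rewrite SE.
  set Pt := P^t*.
  set D := diag_mx _.
  rewrite !mulmxA.
  rewrite -(mulmxA (Pt *m D) P Pt) PP1 mulmx1.
  rewrite -(mulmxA Pt D D) /D mulmx_diag.
  done.
have h1 := @qf_diag _ _ P (map_mx (real_complex R) d) y.
have h2 := @qf_diag _ _ P (\row_j (map_mx (real_complex R) d 0 j * map_mx (real_complex R) d 0 j)) y.
rewrite [in X in _ <= X]SSE.
rewrite [X in _ <= X]h2.
rewrite SE.
rewrite [X in _ * X <= _]h1.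
rewrite mulr_sumr.
move: (y *m P^t*) => z.
apply: ler_sum => i _.
rewrite !mxE.
have ci : c <= d 0 i.
  apply: hS; rewrite eigenvalue_root_char chE; exact: root_prod_ord.
apply: aux2; first exact: mul_conjC_ge0.
- by rewrite lecR.
- by rewrite ler0c (le_trans c0).
Qed.

Lemma jensen (R : realFieldType) n (w y : 'I_n -> R) :
  (forall k, 0 <= w k) -> \sum_k w k = 1 ->
  (\sum_k w k * y k) ^+ 2 <= \sum_k w k * y k ^+ 2.
Proof.
move=> w0 w1; set m := \sum_k w k * y k.
have H : 0 <= \sum_k w k * (y k - m) ^+ 2.
  by apply: sumr_ge0 => k _; rewrite mulr_ge0 // sqr_ge0.
have E : \sum_k w k * (y k - m) ^+ 2 =
    \sum_k w k * y k ^+ 2 - (m *+ 2) * m + m ^+ 2 * \sum_k w k.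
  have -> : (m *+ 2) * m = \sum_k (m *+ 2) * (w k * y k) by rewrite {2}/m mulr_sumr.
  have -> : m ^+ 2 * \sum_k w k = \sum_k m ^+ 2 * w k by rewrite mulr_sumr.
  rewrite -sumrB -big_split /=; apply: eq_bigr => k _.
  rewrite sqrrB; ring.
rewrite E w1 mulr1 mulr2n in H; set a := \sum_k w k * y k ^+ 2 in H *.
rewrite -subr_ge0; apply: (le_trans H); rewrite le_eqVlt; apply/orP; left; apply/eqP; ring.
Qed.

Lemma Qbound (R : rcfType) p (P : 'M[R]_p) (pi : 'rV[R]_p) K (x : 'cV[R]_p) :
  (forall i j, 0 <= P i j) -> (forall i, \sum_j P i j = 1) -> pi *m P = pi ->
  (forall j, 0 < pi 0 j) -> (forall j, pi 0 j <= K) -> 0 <= K ->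
  \sum_i (((diag_mx pi *m P *m diag_mx (\row_j (Num.sqrt (pi 0 j))^-1)) *m x) i 0) ^+ 2
   <= K * \sum_j (x j 0) ^+ 2.
Proof.
move=> P0 P1 st pi0 piK K0.
set y := fun k => x k 0 / Num.sqrt (pi 0 k).
have QE : forall i, ((diag_mx pi *m P *m diag_mx (\row_j (Num.sqrt (pi 0 j))^-1)) *m x) i 0
   = pi 0 i * \sum_k P i k * y k.
  move=> i; rewrite mxE mulr_sumr; apply: eq_bigr => k _.
  rewrite mul_mx_diag mul_diag_mx !mxE /y; ring.
under eq_bigr => i _ do rewrite QE.
have step : forall i, (pi 0 i * \sum_k P i k * y k) ^+ 2 <=
    K * (pi 0 i * \sum_k P i k * y k ^+ 2).
  move=> i; rewrite exprMn.
  have h1 := @jensen _ _ (fun k => P i k) y (P0 i) (P1 i).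
  apply: (le_trans (ler_wpM2l _ h1)); first by rewrite sqr_ge0.
  rewrite expr2 (mulrA K).
  apply: ler_wpM2r.
    by apply: sumr_ge0 => k _; rewrite mulr_ge0 // sqr_ge0.
  by apply: ler_wpM2r; [exact: ltW | exact: piK].
apply: (le_trans (ler_sum _ (fun i _ => step i))).
rewrite -mulr_sumr; apply: ler_wpM2l.
  done.
rewrite le_eqVlt; apply/orP; left; apply/eqP.
under eq_bigr => i _ do rewrite mulr_sumr.
rewrite exchange_big /=; apply: eq_bigr => k _.
have -> : \sum_i pi 0 i * (P i k * y k ^+ 2) = pi 0 k * y k ^+ 2.
  by rewrite -[in RHS]st mxE mulr_suml; apply: eq_bigr => i _; rewrite mulrA.
have sq := sqr_sqrtr (ltW (pi0 k)).
have nz : Num.sqrt (pi 0 k) != 0 by rewrite sqrtr_eq0 -ltNge.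
rewrite /y expr_div_n sq mulrC -mulrA mulVf ?mulr1 //.
by rewrite gt_eqF.
Qed.

Lemma count_lower (R : rcfType) p r (M : 'M[R]_p) (B : 'M[R]_(r, p)) (t : R)
   (P : 'M[R[i]]_p) (d : 'rV[R]_p) :
  P *m P^t* = 1%:M -> P^t* *m P = 1%:M ->
  map_mx (real_complex R) M = P^t* *m diag_mx (map_mx (real_complex R) d) *m P ->
  \rank B = r ->
  (forall w : 'rV[R[i]]_r,
     real_complex R t * ((w *m map_mx (real_complex R) B) *m (w *m map_mx (real_complex R) B)^t*) 0 0
     <= ((w *m map_mx (real_complex R) B) *m map_mx (real_complex R) M *m (w *m map_mx (real_complex R) B)^t*) 0 0) ->
  (r + #|[pred i | (d 0 i < t)%R]| <= p)%N.
Proof.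
move=> PP1 PP2 ME rB Hq.
set L := [pred i | (d 0 i < t)%R]; set k := #|L|.
rewrite leqNgt; apply/negP => Hlt.
pose f := fun a : 'I_k => enum_val (A := L) a.
pose Sl := rowsub f P.
have SlP : Sl *m P^t* = rowsub f (P *m P^t*).
  by apply/matrixP => a j; rewrite !mxE; apply: eq_bigr => l _; rewrite !mxE.
have SlS : Sl *m Sl^t* = 1%:M.
  apply/matrixP => a b.
  have -> : (Sl *m Sl^t*) a b = (Sl *m P^t*) a (f b).
    by rewrite !mxE; apply: eq_bigr => l _; rewrite !mxE.
  by rewrite SlP PP1 !mxE (inj_eq (@enum_val_inj _ _)).
have rSl : \rank Sl = k.
  apply/eqP; rewrite eqn_leq rank_leq_row /=.
  by rewrite -{1}(mxrank1 (R[i] : fieldType) k) -SlS mxrankM_maxl.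
set W := map_mx (real_complex R) B.
have rW : \rank W = r by rewrite mxrank_map.
have := mxrank_sum_cap Sl W; rewrite rSl rW => Hs.
have capnz : (Sl :&: W)%MS != 0.
  rewrite -mxrank_eq0; apply/negP => /eqP H0.
  move: Hs; rewrite H0 addn0 => Hs.
  have := rank_leq_col (Sl + W)%MS; rewrite Hs.
  by rewrite leqNgt addnC Hlt.
have [v vcap vnz] := rowV0Pn capnz.
have [u vu] := submxP (submx_trans vcap (capmxSl _ _)).
have [w vw] := submxP (submx_trans vcap (capmxSr _ _)).
have Hv := Hq w; rewrite -/W -vw in Hv.
rewrite ME (@qf_diag _ _ P _ v) (@dot_unitary _ _ P v PP2) dotC_expand in Hv.
have zE : v *m P^t* = u *m rowsub f 1%:M by rewrite vu -mulmxA SlP PP1.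
have zv : (v *m P^t*) *m P = v by rewrite -mulmxA PP2 mulmx1.
move: Hv zE zv; move: (v *m P^t*) => z Hv zE zv.
have z0 : forall j, j \notin L -> z 0 j = 0.
  move=> j jL; rewrite zE mxE big1 // => a _; rewrite !mxE.
  case: eqP => [fa|]; last by rewrite mulr0.
  by move: jL; rewrite -fa enum_valP.
have [j0 zj0] : exists j0, z 0 j0 != 0.
  case: (boolP [exists j, z 0 j != 0]) => [/existsP //| /existsPn H].
  move: vnz; rewrite -zv.
  have -> : z = 0 by apply/rowP => j; rewrite mxE; apply/eqP/negPn/H.
  by rewrite mul0mx eqxx.
have j0L : j0 \in L by apply: contraR zj0 => /z0 ->.
move: Hv; rewrite mulr_sumr; apply/negP; rewrite lt_geF //.
rewrite (bigD1 j0) //= [X in _ < X](bigD1 j0) //=.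
apply: ltr_leD.
  by rewrite mxE ltr_pM2r ?mul_conjC_gt0 // ltcR.
apply: ler_sum => j _; rewrite mxE.
case: (boolP (j \in L)) => jL.
  by apply: ler_wpM2r; [exact: mul_conjC_ge0 | rewrite lecR; apply: ltW].
by rewrite z0 // mul0r !mulr0.
Qed.

Lemma sorted_count_nth (R : realDomainType) (e : seq R) (t : R) k :
  sorted (fun x y => y <= x) e -> (k < count (fun x => (t <= x)%R) e)%N ->
  t <= nth 0 e k.
Proof.
elim: e k => [|a e IH] k //= se.
have tr : transitive (fun x y : R => y <= x).
  by move=> x y z yx zy; apply: le_trans zy yx.
case: k => [|k] /=.
  move=> hc; case ta: (t <= a) => //.
  move: hc; rewrite ta add0n -has_count => /hasP [x xe tx].
  have := order_path_min tr se => /allP /(_ x xe) xa.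
  by rewrite (le_trans tx xa) in ta.
move=> hc; apply: IH; first exact: path_sorted se.
by move: hc; case: (t <= a) => /=; rewrite ?add1n ?add0n ?ltnS // => /ltnW.
Qed.

Lemma count_map_enum (R : numDomainType) n (d : 'I_n -> R) (P : pred R) :
  count P [seq d i | i <- index_enum 'I_n] = #|[pred i | P (d i)]|.
Proof. rewrite count_map cardE size_filter /index_enum; unlock => //=. Qed.

Lemma tC_real (R : rcfType) m n (A : 'M[R]_(m, n)) :
  (map_mx (real_complex R) A)^t* = map_mx (real_complex R) A^T.
Proof. by apply/matrixP => i j; rewrite !mxE; exact: conjc_real. Qed.

Local Close Scope sesquilinear_scope.

Theorem mainTheorem6 (R : rcfType) (c1 C1 c2 : R) (p r : nat)
    (U V : 'M[R]_(p, r)) (pi : 'rV[R]_p) :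
  0 < c1 -> 0 < C1 -> 0 < c2 ->
  (forall i j, 0 <= U i j) -> (forall i j, 0 <= V i j) ->
  U *m const_mx 1 = const_mx 1 :> 'cV[R]_p ->
  V^T *m const_mx 1 = const_mx 1 :> 'cV[R]_r ->
  ergodic (U *m V^T) ->
  stationary_distribution (U *m V^T) pi ->
  (forall j, c1 / p%:R <= pi 0 j /\ pi 0 j <= C1 / p%:R) ->
  lambda_min_ge (U^T *m (diag_mx pi *m diag_mx pi) *m U) (c2 / (p%:R * r%:R)) ->
  lambda_min_ge (V^T *m invmx (diag_mx pi) *m V) (c2 * r%:R) ->
  let Q := diag_mx pi *m (U *m V^T) *m
             diag_mx (\row_j (Num.sqrt (pi 0 j))^-1) in
  exists s : seq R,
    singular_values Q s /\
    c2 / Num.sqrt p%:R <= s`_(r.-1) /\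
    s`_(r.-1) <= s`_0 /\
    s`_0 <= C1 / Num.sqrt c1 / Num.sqrt p%:R.
Proof.
move=> c1p C1p c2p U0 V0 hU1 hV1 [[P0 P1] _] [pi0 [pisum st]] hpi hH hG Q.
have [j0 _] : exists j : 'I_p, true.
  case: (pickP 'I_p) => [j _|H]; first by exists j.
  move: pisum; rewrite big1 => [/eqP|i _]; first by rewrite eq_sym oner_eq0.
  by have := H i.
have p_gt0 : (0 < p)%N by apply: leq_ltn_trans (ltn_ord j0).
have [k0 _] : exists k : 'I_r, true.
  case: (pickP 'I_r) => [k _|H]; first by exists k.
  have := congr1 (fun M : 'cV[R]_p => M j0 0) hU1; rewrite !mxE big1 => [/eqP|i _].
    by rewrite eq_sym oner_eq0.
  by have := H i.
have r_gt0 : (0 < r)%N by apply: leq_ltn_trans (ltn_ord k0).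
have pR : 0 < p%:R :> R by rewrite ltr0n.
have rR : 0 < r%:R :> R by rewrite ltr0n.
have pipos : forall j, 0 < pi 0 j.
  by move=> j; apply: lt_le_trans (proj1 (hpi j)); rewrite divr_gt0.
have c1C1 : c1 <= C1.
  have [h1 h2] := hpi j0; have := le_trans h1 h2.
  by rewrite ler_pM2r // invr_gt0.
set Dh := diag_mx (\row_j (Num.sqrt (pi 0 j))^-1).
set Am := diag_mx pi *m U.
set Bm := V^T *m Dh.
have QE : Q = Am *m Bm by rewrite /Q /Am /Bm !mulmxA.
have Hdef : Am^T *m Am = U^T *m (diag_mx pi *m diag_mx pi) *m U.
  by rewrite /Am trmx_mul tr_diag_mx !mulmxA.
have invD : invmx (diag_mx pi) = diag_mx (\row_j (pi 0 j)^-1).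
  have E : diag_mx pi *m diag_mx (\row_j (pi 0 j)^-1) = 1%:M.
    rewrite mulmx_diag; apply/matrixP => i j; rewrite !mxE.
    case: (i =P j) => [->|_]; last by rewrite !mulr0n.
    by rewrite !mulr1n divff // gt_eqF.
  have [u1 _] := mulmx1_unit E.
  by rewrite -[invmx _]mulmx1 -E mulmxA mulVmx // mul1mx.
have Gdef : Bm *m Bm^T = V^T *m invmx (diag_mx pi) *m V.
  rewrite /Bm trmx_mul trmxK /Dh tr_diag_mx invD !mulmxA -(mulmxA (V^T)) mulmx_diag.
  congr (_ *m diag_mx _ *m _); apply/rowP => j; rewrite !mxE -invfM.
  by rewrite -expr2 sqr_sqrtr // ltW.
set M := Q^T *m Q.
have Msym : M^T = M by rewrite /M trmx_mul trmxK.
set H := Am^T *m Am.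
have Hsym : H^T = H by rewrite /H trmx_mul trmxK.
set G := Bm *m Bm^T.
have Gsym : G^T = G by rewrite /G trmx_mul trmxK.
have hH' : lambda_min_ge H (c2 / (p%:R * r%:R)) by rewrite /H Hdef.
have hG' : lambda_min_ge G (c2 * r%:R) by rewrite /G Gdef.
have Gfree : row_free G.
  apply/negPn/negP => nf.
  have ev : eigenvalue G 0.
    rewrite /eigenvalue /eigenspace.
    have -> : (0 : R)%:M = 0 :> 'M_r by apply/matrixP => i j; rewrite !mxE mul0rn.
    by rewrite subr0 kermx_eq0.
  have := hG' 0 ev; apply/negP; rewrite -ltNge; exact: mulr_gt0.
have rB : \rank Bm = r.
  apply/eqP; rewrite eqn_leq rank_leq_row /=.
  by move: Gfree; rewrite /row_free => /eqP {1}<-; apply: mxrankM_maxl.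
have rp : (r <= p)%N by rewrite -rB rank_leq_col.
have [Pc [d [PP1 PP2 MEq chE]]] := @sym_spectral _ _ M Msym.
set t := c2 ^+ 2 / p%:R.
have ME' : M = Bm^T *m H *m Bm by rewrite /M QE trmx_mul /H !mulmxA.
have Hq : forall w : 'rV[R[i]]_r,
     real_complex R t * ((w *m map_mx (real_complex R) Bm) *m (w *m map_mx (real_complex R) Bm)^t*)%sesqui 0 0
     <= ((w *m map_mx (real_complex R) Bm) *m map_mx (real_complex R) M *m (w *m map_mx (real_complex R) Bm)^t*)%sesqui 0 0.
  move=> w.
  have E3 : (w *m map_mx (real_complex R) G *m w^t* =
      (w *m map_mx (real_complex R) Bm) *m (w *m map_mx (real_complex R) Bm)^t*)%sesqui.
    by rewrite trmxC_mul tC_real /G map_mxM !mulmxA.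
  have E2 : ((w *m map_mx (real_complex R) G) *m (w *m map_mx (real_complex R) G)^t* =
      w *m (map_mx (real_complex R) G *m map_mx (real_complex R) G) *m w^t*)%sesqui.
    by rewrite trmxC_mul tC_real Gsym !mulmxA.
  have E1 : ((w *m map_mx (real_complex R) Bm) *m map_mx (real_complex R) M *m (w *m map_mx (real_complex R) Bm)^t* =
      (w *m map_mx (real_complex R) G) *m map_mx (real_complex R) H *m (w *m map_mx (real_complex R) G)^t*)%sesqui.
    rewrite !trmxC_mul !tC_real Gsym ME' /G !map_mxM !mulmxA //.
  have L1i := @L1 _ _ H _ Hsym hH' (w *m map_mx (real_complex R) G).
  have cG0 : 0 <= c2 * r%:R by rewrite mulr_ge0 // ltW.
  have L2i := @L2 _ _ G _ Gsym hG' cG0 w.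
  rewrite E2 in L1i; rewrite E3 in L2i.
  rewrite [in X in _ <= X]E1; apply: le_trans L1i.
  have -> : real_complex R t = real_complex R (c2 / (p%:R * r%:R)) * real_complex R (c2 * r%:R).
    rewrite -rmorphM; congr (real_complex R _); rewrite /t; field.
    by rewrite !gt_eqF.
  rewrite -mulrA; apply: ler_wpM2l L2i.
  by rewrite ler0c divr_ge0 ?ltW // mulr_gt0.
have cnt := @count_lower _ p r M Bm t Pc d PP1 PP2 MEq rB Hq.
have cntH : (r <= #|[pred i | (t <= d 0 i)%R]|)%N.
  have := cardC [pred i | (d 0 i < t)%R]; rewrite card_ord => cC.
  have -> : #|[pred i | (t <= d 0 i)%R]| = #|[predC [pred i | (d 0 i < t)%R]]|.
    by apply: eq_card => i; rewrite !inE ltNge negbK.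
  by rewrite -(leq_add2r #|[pred i | (d 0 i < t)%R]|) [X in (_ <= X)%N]addnC cC.
set e := sort (fun x y : R => y <= x) [seq d 0 i | i <- index_enum 'I_p].
have tot : total (fun x y : R => y <= x) by move=> x y; exact: le_total.
have se : sorted (fun x y : R => y <= x) e by apply: sort_sorted.
have sze : size e = p.
  by rewrite size_sort size_map /index_enum; unlock => /=; rewrite -enumT size_enum_ord.
have cnte : count (fun x => (t <= x)%R) e = #|[pred i | (t <= d 0 i)%R]|.
  by rewrite count_sort (@count_map_enum _ _ (fun i => d 0 i)).
have t0 : 0 <= t by rewrite divr_ge0 ?sqr_ge0 // ltW.
have er : t <= e`_(r.-1).
  apply: sorted_count_nth => //; rewrite cnte; apply: leq_trans cntH.
  by rewrite prednK.
have r1p : (r.-1 < size e)%N by rewrite sze; apply: leq_trans rp; rewrite prednK.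
have e0p : (0 < size e)%N by rewrite sze.
have er0 : e`_(r.-1) <= e`_0.
  have := @sorted_leq_nth _ _ _ _ 0 e se 0 r.-1 e0p r1p (leq0n _).
  apply.
  - by move=> x y z yx zy; apply: le_trans zy yx.
  - by move=> x.
have eup : e`_0 <= C1 / p%:R.
  have : e`_0 \in e by apply: mem_nth.
  rewrite mem_sort => /mapP [i _ ->].
  have : eigenvalue M (d 0 i) by rewrite eigenvalue_root_char chE; apply: root_prod_ord.
  move=> /eigenvalueP [v vM vnz].
  have E1 : (v *m M *m v^T) 0 0 = d 0 i * (v *m v^T) 0 0.
    by rewrite vM -scalemxAl mxE.
  have E2 : (v *m M *m v^T) 0 0 = \sum_k ((Q *m v^T) k 0) ^+ 2.
    have -> : v *m M *m v^T = (Q *m v^T)^T *m (Q *m v^T) by rewrite trmx_mul trmxK /M !mulmxA.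
    by rewrite mxE; apply: eq_bigr => k _; rewrite mxE expr2.
  have E3 : (v *m v^T) 0 0 = \sum_k (v^T k 0) ^+ 2.
    by rewrite mxE; apply: eq_bigr => k _; rewrite !mxE expr2.
  have K0 : 0 <= C1 / p%:R by rewrite divr_ge0 // ltW.
  have Qb := @Qbound _ _ (U *m V^T) pi (C1 / p%:R) v^T P0 P1 st pipos (fun j => proj2 (hpi j)) K0.
  have vv : 0 < (v *m v^T) 0 0.
    have [j vj] : exists j, v 0 j != 0.
      case: (boolP [exists j, v 0 j != 0]) => [/existsP //| /existsPn Hn].
      move: vnz; have -> : v = 0 by apply/rowP => j; rewrite mxE; apply/eqP/negPn/Hn.
      by rewrite eqxx.
    rewrite E3 (bigD1 j) //= ltr_wpDr //; first by apply: sumr_ge0 => k _; rewrite sqr_ge0.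
    by rewrite mxE lt_def sqrf_eq0 vj sqr_ge0.
  rewrite -(ler_pM2r vv) -E1 E2 E3; exact: Qb.
exists (map Num.sqrt e).
rewrite (nth_map 0) // (nth_map 0) //.
have er0' : 0 <= e`_(r.-1) by apply: le_trans er.
split; last split; last split.
- exists e; split => //; split => //.
  rewrite chE (perm_big _ (permEl (perm_sort _ _))) big_map //.
- have -> : c2 / Num.sqrt p%:R = Num.sqrt t.
    rewrite /t sqrtrM ?sqr_ge0 // sqrtr_sqr ger0_norm ?ltW // sqrtrV // ltW.
  by rewrite ler_sqrt.
- by rewrite ler_sqrt // (le_trans er0').
- have pos : 0 <= C1 / Num.sqrt c1 / Num.sqrt p%:R.
    by rewrite !divr_ge0 ?sqrtr_ge0 // ltW.
  rewrite -(ger0_norm pos) -sqrtr_sqr ler_sqrt ?sqr_ge0 //.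
  apply: (le_trans eup).
  rewrite !expr_div_n (sqr_sqrtr (ltW c1p)) (sqr_sqrtr (ltW pR)).
  rewrite ler_pM2r ?invr_gt0 // ler_pdivlMr // expr2 ler_pM2l //.
Qed.
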